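(* There exists a constant $C>0$ such that for all $n\ge2$, \[ \|Z_n-Z_{n-1}\|_{L^1}\le C\,\frac{\log n}{n}, \] where $Z_n$ and $Z_{n-1}$ are defined on a common probability space via a coupling of the geometric variables as described in the context.
   Context: For $m\ge1$, $i\in\{1,\dots,m\}$ let $p_i^m=\frac{m-i+1}{m}$ and $\operatorname{Geom}(p)$ be the geometric law on $\{1,2,\dots\}$, $P(k)=p(1-p)^{k-1}$. For $n\ge2$, the variables $(\tau_i^{n-1})_{1\le i\le n-1}$ (independent, $\tau_i^{n-1}\sim\operatorname{Geom}(p_i^{n-1})$) and $(\tau_i^n)_{1\le i\le n}$ (independent, $\tau_i^n\sim\operatorname{Geom}(p_i^n)$) are defined on a common probability space such that $\tau_{i-1}^{n-1}\le\tau_i^n$ a.s. for $2\le i\le n$. Then $Z_m=\frac1m\sum_{i=1}^m\tau_i^m-\log m$ for $m\in\{n-1,n\}$ (so $Z_m$ has the law of $T_m/m-\log m$, $T_m$ the coupon collector's completion time for $m$ coupons). *)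

(* Defs.v *)
From HB Require Import structures.
From mathcomp Require Import all_boot all_order all_algebra.
From mathcomp Require Import all_classical all_reals all_analysis.
Set Implicit Arguments. Unset Strict Implicit. Unset Printing Implicit Defensive.
Import Order.TTheory GRing.Theory Num.Theory.
Local Open Scope classical_set_scope.
Local Open Scope ring_scope.

Definition pcc {R : realType} (m i : nat) : R := ((m - i + 1)%:R / m%:R).

Definition geom_law {R : realType} {d : measure_display} {T : measurableType d}
  (P : probability T R) (p : R) (X : T -> R) : Prop :=
  measurable_fun setT X /\
  forall k : nat, (0 < k)%N ->
    P (X @^-1` [set k%:R]) = (p * (1 - p) ^+ k.-1)%:E.

Definition mutually_independent {R : realType} {d : measure_display}
  {T : measurableType d} (P : probability T R) (I : set nat) (X : nat -> T -> R)
  : Prop :=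
  forall (J : seq nat), uniq J -> (forall j, j \in J -> I j) ->
  forall B : nat -> set R, (forall j, measurable (B j)) ->
    P (\big[setI/setT]_(j <- J) (X j @^-1` B j))
    = (\prod_(j <- J) P (X j @^-1` B j))%E.

Definition Zcc {R : realType} {T : Type} (m : nat) (tau : nat -> T -> R) (t : T) : R :=
  (m%:R)^-1 * (\sum_(1 <= i < m.+1) tau i t) - ln (m%:R).

(* Main.v *)
Require Import Defs.
From HB Require Import structures.
From mathcomp Require Import all_boot all_order all_algebra.
From mathcomp Require Import all_classical all_reals all_analysis.
From mathcomp Require Import ring lra.
From mathcomp Require Import measurable_realfun.
Import Order.TTheory GRing.Theory Num.Theory.
Import numFieldNormedType.Exports.
Local Open Scope classical_set_scope.
Local Open Scope ring_scope.

Section S.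
Variable R : realType.

Lemma key_ln (k : R) : 1 <= k -> k^-1 <= 2 * (ln (k + 1) - ln k).
Proof.
move=> k1.
have k0 : 0 < k by lra.
have k10 : 0 < k + 1 by lra.
have h := @le_ln1Dx R (- (k + 1)^-1).
have : -1 < - (k + 1)^-1.
  rewrite ltrN2 invf_lt1 //; lra.
move/h.
have -> : 1 + - (k + 1)^-1 = k / (k + 1) by field; lra.
rewrite ln_div ?posrE //.
move=> H.
have : (k + 1)^-1 <= ln (k + 1) - ln k by lra.
move=> H2; apply: le_trans _ (_ : 2 * (k + 1)^-1 <= _); last by lra.
have -> : 2 * (k + 1)^-1 = k^-1 + (k - 1) / (k * (k + 1)) by field; lra.
rewrite lerDl divr_ge0 //; [lra | apply: mulr_ge0; lra].
Qed.

Lemma series_EFin (u : nat -> R) (l : R) : series u @ \oo --> l ->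
  (\sum_(k <oo) (u k)%:E = l%:E)%E.
Proof.
move=> ul.
rewrite (_ : (fun n => \sum_(0 <= k < n) (u k)%:E)%E = EFin \o series u); last first.
  by apply/funext => n; rewrite /= sumEFin /series /=.
by rewrite EFin_lim ?(cvg_lim _ ul) //; exact: (cvgP _ ul).
Qed.

Lemma geom_sum1 (p : R) : 0 < p <= 1 ->
  series (fun k => p * (1 - p) ^+ k) @ \oo --> (1:R).
Proof.
move=> /andP[p0 p1].
have := @cvg_geometric_series R p (1 - p).
rewrite (_ : p * (1 - (1 - p))^-1 = 1); last by rewrite opprB addrC subrK divff // gt_eqF.
apply; rewrite ger0_norm; lra.
Qed.

Lemma geom_mean_partial (p : R) (N : nat) : 0 < p ->
  series (fun k => k.+1%:R * p * (1 - p) ^+ k) N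
  = (1 - (1 - p) ^+ N) / p - N%:R * (1 - p) ^+ N.
Proof.
move=> p0; elim: N => [|N IH].
  by rewrite /series /= big_geq // expr0 subrr mul0r mul0r subr0.
rewrite /series /= big_nat_recr //= -/(series _ N).
rewrite /series /= in IH; rewrite IH exprS.
field; lra.
Qed.

Lemma geom_mean (p : R) : 0 < p <= 1 ->
  series (fun k => k.+1%:R * p * (1 - p) ^+ k) @ \oo --> p^-1.
Proof.
move=> /andP[p0 p1].
have q1 : `|1 - p| < 1 by rewrite ger0_norm; lra.
have qN : (fun N => (1 - p) ^+ N) @ \oo --> (0:R).
  have -> : (fun N => (1 - p) ^+ N) = geometric 1 (1 - p).
    by apply/funext => N; rewrite /= mul1r.
  exact: cvg_geometric.
have v_cvg : cvgn (series (fun k => k.+1%:R * (1 - p) ^+ k)).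
  apply: nondecreasing_is_cvgn.
    apply/nondecreasing_seqP => N; rewrite /series /= big_nat_recr //= lerDl.
    by apply: mulr_ge0 => //; apply: exprn_ge0; lra.
  exists (p^-1 / p) => _ [N _ <-].
  have := @geom_mean_partial p N p0.
  rewrite /series /=.
  under eq_bigr do rewrite mulrAC.
  rewrite -mulr_suml => E.
  have -> : \sum_(0 <= i < N) i.+1%:R * (1 - p) ^+ i = 
     ((1 - (1 - p) ^+ N) / p - N%:R * (1 - p) ^+ N) / p.
    by rewrite -E mulfK // gt_eqF.
  rewrite ler_pM2r ?invr_gt0 //.
  have h1 : 0 <= N%:R * (1 - p) ^+ N by apply: mulr_ge0 => //; apply: exprn_ge0; lra.
  have h2 : 0 <= (1 - p) ^+ N by apply: exprn_ge0; lra.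
  have : (1 - (1 - p) ^+ N) / p <= p^-1.
    rewrite -[X in _ <= X]mul1r; apply: ler_wpM2r; [rewrite invr_ge0; lra | lra].
  lra.
have v0 := cvg_series_cvg_0 v_cvg.
have nqN : (fun N => N%:R * (1 - p) ^+ N) @ \oo --> (0:R).
  have -> : (fun N => N%:R * (1 - p) ^+ N) = 
    (fun N => N.+1%:R * (1 - p) ^+ N - (1 - p) ^+ N).
    by apply/funext => N; rewrite -addn1 natrD mulrDl mul1r addrK.
  have := cvgB v0 qN; rewrite subr0; exact.
rewrite (_ : series _ = fun N => (1 - (1 - p) ^+ N) / p - N%:R * (1 - p) ^+ N); last first.
  by apply/funext => N; rewrite geom_mean_partial.
have := cvgB (cvgMr_tmp (b:=p^-1) (cvgB (cvg_cst (1:R)) qN)) nqN.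
rewrite !subr0 mul1r; exact.
Qed.
End S.
Arguments geom_sum1 {R p}.
Arguments series_EFin {R u l}.
Arguments geom_mean {R p}.

Definition ppart {R : realType} (x : R) : R := Num.max x 0.

Section G.
Context (R : realType) d (T : measurableType d) (P : probability T R).

Lemma geom_facts (p : R) (X : T -> R) : 0 < p <= 1 -> geom_law P p X ->
  {ae P, forall t, 0 <= X t} /\
  (\int[P]_t (ppart (X t))%:E = (p^-1)%:E)%E.
Proof.
move=> p01 [mX PX].
pose A k := X @^-1` [set k.+1%:R].
have mA k : measurable (A k).
  by rewrite /A -[X @^-1` _]setTI; apply: mX => //; exact: measurable_set1.
have tA : trivIset setT A.
  move=> i j _ _ [t [Hi Hj]].
  by move: (etrans (esym Hi) Hj) => /eqP; rewrite eqr_nat eqSS => /eqP.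
have PA k : P (A k) = (p * (1 - p) ^+ k)%:E by rewrite /A PX.
pose U := \bigcup_k A k.
have mU : measurable U by exact: bigcup_measurable.
have PU : P U = 1%E.
  rewrite /U measure_bigcup //.
  rewrite (eq_eseriesr (g := fun k => (p * (1 - p) ^+ k)%:E)); last first.
    by move=> k _; exact: PA.
  rewrite eseries_mkcond.
  rewrite (eq_eseriesr (g := fun k => (p * (1 - p) ^+ k)%:E)); last first.
    by move=> k _; rewrite in_setT.
  exact: series_EFin (geom_sum1 p01).
have PNU : P (~` U) = 0%E by rewrite probability_setC // PU subee.
split.
  exists (~` U); split => //; first exact: measurableC.
  move=> t /= Xt0 Ut; apply: Xt0.
  case: Ut => k _; rewrite /A /= => ->; exact: ler0n.
have mf : measurable_fun setT (fun t => (ppart (X t))%:E).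
  apply/measurable_EFinP; apply: measurable_maxr => //; exact: measurable_cst.
have f0 : forall t, setT t -> (0 <= (ppart (X t))%:E)%E.
  by move=> t _; rewrite lee_fin /ppart le_max lexx orbT.
rewrite (ge0_negligible_integral _ _ _ _ PNU) //; last exact: measurableC.
rewrite setTD setCK /U ge0_integral_bigcup //; last first.
  - by move=> t _; apply: f0.
  - exact: measurable_funS mf.
rewrite (eq_eseriesr (g := fun k => (k.+1%:R * p * (1 - p) ^+ k)%:E)); last first.
  move=> k _.
  rewrite (eq_integral (fun=> (k.+1%:R)%:E)); last first.
    move=> t; rewrite inE /A /= => ->.
    by rewrite /ppart max_l // ler0n.
  by rewrite integral_cst // -mulrA EFinM; congr (_ * _)%E; exact: PA.
exact: series_EFin (geom_mean p01).
Qed.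
End G.

From mathcomp Require Import zify.

Section More.
Variable R : realType.

Lemma pcc01 (N i : nat) : (1 <= i <= N)%N -> 0 < @pcc R N i <= 1.
Proof.
move=> /andP[i1 iN]; rewrite /pcc.
have N0 : (0 < N)%N by lia.
have NR : (0 : R) < N%:R by rewrite ltr0n.
apply/andP; split.
  by apply: divr_gt0 => //; rewrite ltr0n; lia.
by rewrite ler_pdivrMr // mul1r ler_nat; lia.
Qed.

Lemma harm_tel (N a b : nat) : (a <= b)%N -> (b <= N.+1)%N ->
  \sum_(a <= i < b) ((N - i + 1)%:R : R)^-1
  <= 2 * ln ((N.+2 - a)%:R) - 2 * ln ((N.+2 - b)%:R).
Proof.
move=> ab bN.
pose u i := - (2 * ln (((N.+2 - i)%:R) : R)).
apply: (@le_trans _ _ (\sum_(a <= i < b) (u i.+1 - u i))).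
  rewrite !big_nat; apply: ler_sum => i /andP[ai ib].
  have e1 : (N.+2 - i.+1 = N - i + 1)%N by clear u; lia.
  have e2 : (N.+2 - i = (N - i + 1) + 1)%N by clear u; lia.
  have k1 : (1 <= N - i + 1)%N by clear u; lia.
  rewrite /u e1 e2; move: (N - i + 1)%N k1 => k k1.
  rewrite natrD.
  have k1' : (1 : R) <= k%:R by rewrite ler1n.
  have := @key_ln R _ k1'; lra.
rewrite telescope_sumr // /u; lra.
Qed.
End More.

Section Int.
Context (R : realType) d (T : measurableType d) (mu : {measure set T -> \bar R}).

Lemma ge0_integral_sum_in (D : set T) (I : eqType) (s : seq I) (f : I -> T -> \bar R) :
  measurable D ->
  (forall k, k \in s -> measurable_fun D (f k)) ->
  (forall k x, k \in s -> D x -> (0 <= f k x)%E) ->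
  (\int[mu]_(x in D) (\sum_(k <- s) f k x) = \sum_(k <- s) \int[mu]_(x in D) f k x)%E.
Proof.
move=> mD mf f0.
pose g k := if k \in s then f k else (fun _ => 0%E).
have -> : (fun x => \sum_(k <- s) f k x)%E = (fun x => \sum_(k <- s) g k x)%E.
  apply/funext => x; rewrite big_seq_cond [RHS]big_seq_cond.
  by apply: eq_bigr => k /andP[ks _]; rewrite /g ks.
rewrite ge0_integral_sum //.
- rewrite big_seq_cond [RHS]big_seq_cond.
  by apply: eq_bigr => k /andP[ks _]; rewrite /g ks.
- by move=> k; rewrite /g; case: ifPn => ks; [exact: mf | exact: measurable_cst].
- by move=> k x Dx; rewrite /g; case: ifPn => ks //; exact: f0.
Qed.
End Int.

Section MS.
Context (R : realType) d (T : measurableType d).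
Lemma measurable_sum_in (D : set T) (I : eqType) (s : seq I) (h : I -> T -> R) :
  (forall i, i \in s -> measurable_fun D (h i)) ->
  measurable_fun D (fun x => \sum_(i <- s) h i x).
Proof.
move=> mh.
pose g k := if k \in s then h k else (fun _ => 0 : R).
have -> : (fun x => \sum_(k <- s) h k x) = (fun x => \sum_(k <- s) g k x).
  apply/funext => x; rewrite big_seq_cond [RHS]big_seq_cond.
  by apply: eq_bigr => k /andP[ks _]; rewrite /g ks.
apply: measurable_sum => k; rewrite /g; case: ifPn => ks; [exact: mh | exact: measurable_cst].
Qed.

Lemma emeasurable_sum_in (D : set T) (I : eqType) (s : seq I) (h : I -> T -> \bar R) :
  (forall i, i \in s -> measurable_fun D (h i)) ->
  measurable_fun D (fun x => \sum_(i <- s) h i x)%E.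
Proof.
move=> mh.
pose g k := if k \in s then h k else (fun _ => 0%E).
have -> : (fun x => \sum_(k <- s) h k x)%E = (fun x => \sum_(k <- s) g k x)%E.
  apply/funext => x; rewrite big_seq_cond [RHS]big_seq_cond.
  by apply: eq_bigr => k /andP[ks _]; rewrite /g ks.
apply: emeasurable_sum => k; rewrite /g; case: ifPn => ks; [exact: mh | exact: measurable_cst].
Qed.

Lemma measurable_ppart (D : set T) (f : T -> R) : measurable_fun D f ->
  measurable_fun D (fun t => ppart (f t)).
Proof. by move=> mf; apply: measurable_maxr => //; exact: measurable_cst. Qed.

Lemma ppart_ge0 (x : R) : 0 <= ppart x.
Proof. by rewrite /ppart le_max lexx orbT. Qed.

Lemma ppart_id (x : R) : 0 <= x -> ppart x = x.
Proof. by move=> x0; rewrite /ppart max_l. Qed.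
End MS.

Theorem lemma3p5 (R : realType) :
  exists C : R, 0 < C /\
  forall n : nat, (2 <= n)%N ->
  forall (d : measure_display) (T : measurableType d) (P : probability T R)
         (tau1 tau2 : nat -> T -> R),
    (* tau1 i = tau_i^{n-1}, i = 1..n-1 : independent, Geom(p_i^{n-1}) *)
    mutually_independent P [set i | (1 <= i <= n.-1)%N] tau1 ->
    (forall i, (1 <= i <= n.-1)%N -> geom_law P (pcc n.-1 i) (tau1 i)) ->
    (* tau2 i = tau_i^n, i = 1..n : independent, Geom(p_i^n) *)
    mutually_independent P [set i | (1 <= i <= n)%N] tau2 ->
    (forall i, (1 <= i <= n)%N -> geom_law P (pcc n i) (tau2 i)) ->
    (* coupling: tau_{i-1}^{n-1} <= tau_i^n a.s. for 2 <= i <= n *)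
    (forall i, (2 <= i <= n)%N -> {ae P, forall t, tau1 i.-1 t <= tau2 i t}) ->
    (\int[P]_t (`| Zcc n tau2 t - Zcc n.-1 tau1 t |)%:E
       <= (C * (ln n%:R / n%:R))%:E)%E.
Proof.
exists 10; split; first by rewrite ltr0n.
move=> n n2 d T P tau1 tau2 _ g1 _ g2 cpl.
case: n n2 g1 g2 cpl => [//|m] m1 g1 g2 cpl.
rewrite [m.+1.-1]/= in g1 *.
have m0 : (1 <= m)%N by [].
set nR : R := m.+1%:R.
set mR : R := m%:R.
have mR1 : 1 <= mR by rewrite /mR ler1n.
have nRE : nR = mR + 1 by rewrite /nR /mR -addn1 natrD.
have F2 i : (1 <= i <= m.+1)%N -> {ae P, forall t, 0 <= tau2 i t} /\
    (\int[P]_t (ppart (tau2 i t))%:E = ((pcc m.+1 i)^-1)%:E)%E.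
  by move=> hi; exact: (@geom_facts _ _ _ P _ _ (@pcc01 R _ _ hi) (g2 i hi)).
have F1 i : (1 <= i <= m)%N -> {ae P, forall t, 0 <= tau1 i t} /\
    (\int[P]_t (ppart (tau1 i t))%:E = ((pcc m i)^-1)%:E)%E.
  by move=> hi; exact: (@geom_facts _ _ _ P _ _ (@pcc01 R _ _ hi) (g1 i hi)).
have M2 i : (1 <= i <= m.+1)%N -> measurable_fun setT (tau2 i).
  by move=> hi; exact: (g2 i hi).1.
have M1 i : (1 <= i <= m)%N -> measurable_fun setT (tau1 i).
  by move=> hi; exact: (g1 i hi).1.
have AE : {ae P, forall t, forall k,
   [/\ (1 <= k <= m.+1)%N -> 0 <= tau2 k t, (1 <= k <= m)%N -> 0 <= tau1 k t
     & (2 <= k <= m.+1)%N -> tau1 k.-1 t <= tau2 k t]}.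
  apply: ae_foralln => k.
  have h2 : {ae P, forall t, (1 <= k <= m.+1)%N -> 0 <= tau2 k t}.
    case: (boolP (1 <= k <= m.+1)%N) => hk.
      by apply: filterS (F2 k hk).1 => t H _.
    by apply: aeW => t hk'.
  have h1 : {ae P, forall t, (1 <= k <= m)%N -> 0 <= tau1 k t}.
    case: (boolP (1 <= k <= m)%N) => hk.
      by apply: filterS (F1 k hk).1 => t H _.
    by apply: aeW => t hk'.
  have hc : {ae P, forall t, (2 <= k <= m.+1)%N -> tau1 k.-1 t <= tau2 k t}.
    case: (boolP (2 <= k <= m.+1)%N) => hk.
      by apply: filterS (cpl k hk) => t H _.
    by apply: aeW => t hk'.
  by apply: filterS3 h2 h1 hc => t a b c; split.
pose fa t := nR^-1 * ppart (tau2 1%N t).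
pose fb t := nR^-1 * \sum_(2 <= i < m.+2) ppart (tau2 i t - tau1 i.-1 t).
pose fc t := (nR * mR)^-1 * \sum_(1 <= j < m.+1) ppart (tau1 j t).
pose K := ln nR - ln mR.
have nR0 : 0 < nR by rewrite nRE; lra.
have mR0 : 0 < mR by lra.
have K0 : 0 <= K.
  rewrite /K subr_ge0 ler_ln ?posrE //; lra.
have mfa : measurable_fun setT fa.
  apply: measurable_funM; first exact: measurable_cst.
  by apply: measurable_ppart; apply: M2.
have mfb : measurable_fun setT fb.
  apply: measurable_funM; first exact: measurable_cst.
  apply: measurable_sum_in => i; rewrite mem_index_iota => /andP[i2 im].
  apply: measurable_ppart; apply: measurable_funB.
    by apply: M2; apply/andP; split; [exact: ltnW|].
  by apply: M1; case: i i2 im => [//|[//|i]] _ /=.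
have mfc : measurable_fun setT fc.
  apply: measurable_funM; first exact: measurable_cst.
  apply: measurable_sum_in => i; rewrite mem_index_iota => /andP[i2 im].
  by apply: measurable_ppart; apply: M1; apply/andP.
have fa0 t : 0 <= fa t by apply: mulr_ge0; [rewrite invr_ge0; lra | exact: ppart_ge0].
have fb0 t : 0 <= fb t.
  apply: mulr_ge0; [rewrite invr_ge0; lra |].
  by apply: sumr_ge0 => i _; exact: ppart_ge0.
have fc0 t : 0 <= fc t.
  apply: mulr_ge0; [rewrite invr_ge0; apply: mulr_ge0; lra |].
  by apply: sumr_ge0 => i _; exact: ppart_ge0.
have mZ2 : measurable_fun setT (Zcc m.+1 tau2).
  rewrite /Zcc; apply: measurable_funB; last exact: measurable_cst.
  apply: measurable_funM; first exact: measurable_cst.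
  apply: measurable_sum_in => i; rewrite mem_index_iota => /andP[i1 im].
  by apply: M2; apply/andP.
have mZ1 : measurable_fun setT (Zcc m tau1).
  rewrite /Zcc; apply: measurable_funB; last exact: measurable_cst.
  apply: measurable_funM; first exact: measurable_cst.
  apply: measurable_sum_in => i; rewrite mem_index_iota => /andP[i1 im].
  by apply: M1; apply/andP.
have stepA : (\int[P]_t (`|Zcc m.+1 tau2 t - Zcc m tau1 t|)%:E
    <= \int[P]_t (fa t + fb t + fc t + K)%:E)%E.
  apply: ae_ge0_le_integral.
  - exact: measurableT.
  - by move=> t _; rewrite lee_fin.
  - apply/measurable_EFinP; apply: measurableT_comp; first exact: normr_measurable.
    exact: measurable_funB.
  - by move=> t _; rewrite lee_fin; have := fa0 t; have := fb0 t; have := fc0 t; lra.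
  - apply/measurable_EFinP; apply: measurable_funD; last exact: measurable_cst.
    by apply: measurable_funD => //; apply: measurable_funD.
  apply: filterS AE => t Ht _; rewrite lee_fin.
  have HA : 0 <= tau2 1%N t by case: (Ht 1%N) => + _ _; apply.
  set A := tau2 1%N t.
  set B := \sum_(2 <= i < m.+2) (tau2 i t - tau1 i.-1 t).
  set C := \sum_(1 <= j < m.+1) tau1 j t.
  have HB : 0 <= B.
    rewrite /B big_nat; apply: sumr_ge0 => i /andP[i2 im].
    rewrite subr_ge0; case: (Ht i) => _ _; apply; apply/andP; split => //.
  have HC : 0 <= C.
    rewrite /C big_nat; apply: sumr_ge0 => i /andP[i2 im].
    case: (Ht i) => _ + _; apply; apply/andP; split => //.
  have eS2 : \sum_(1 <= i < m.+2) tau2 i t = A + B + C.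
    rewrite big_ltn // -addrA; congr (_ + _).
    rewrite /C (_ : \sum_(1 <= j < m.+1) tau1 j t = \sum_(2 <= i < m.+2) tau1 i.-1 t);
      last by rewrite [RHS]big_add1.
    by rewrite /B -big_split /=; apply: eq_bigr => i _; rewrite subrK.
  have efa : fa t = nR^-1 * A by rewrite /fa ppart_id.
  have efb : fb t = nR^-1 * B.
    rewrite /fb /B; congr (_ * _); rewrite !big_nat; apply: eq_bigr => i /andP[i2 im].
    rewrite ppart_id // subr_ge0; case: (Ht i) => _ _; apply; apply/andP; split => //.
  have efc : fc t = (nR * mR)^-1 * C.
    rewrite /fc /C; congr (_ * _); rewrite !big_nat; apply: eq_bigr => i /andP[i2 im].
    rewrite ppart_id //; case: (Ht i) => _ + _; apply; apply/andP; split => //.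
  rewrite efa efb efc /Zcc -/nR -/mR eS2.
  have eC : nR^-1 * C - mR^-1 * C = - ((nR * mR)^-1 * C).
    rewrite nRE; field; apply/andP; split; apply/eqP; lra.
  have h1 : 0 <= nR^-1 * A by apply: mulr_ge0 => //; rewrite invr_ge0; lra.
  have h2 : 0 <= nR^-1 * B by apply: mulr_ge0 => //; rewrite invr_ge0; lra.
  have h3 : 0 <= (nR * mR)^-1 * C.
    by apply: mulr_ge0 => //; rewrite invr_ge0; apply: mulr_ge0; lra.
  have K1 : 0 <= ln nR - ln mR := K0.
  rewrite -/C !mulrDr ler_norml /K.
  move: eC h1 h2 h3 K1.
  move: (nR^-1 * A) (nR^-1 * B) (nR^-1 * C) (mR^-1 * C) ((nR * mR)^-1 * C) (ln nR) (ln mR) => a b c d1 e f g ? ? ? ? ?.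
  apply/andP; split; lra.
have mpp (f : T -> R) : measurable_fun setT f -> measurable_fun setT (fun t => (ppart (f t))%:E).
  by move=> mf; apply/measurable_EFinP; exact: measurable_ppart.
have pp0 (f : T -> R) : forall t, setT t -> (0 <= (ppart (f t))%:E)%E.
  by move=> t _; rewrite lee_fin ppart_ge0.
have mdiff i : (2 <= i <= m.+1)%N ->
    measurable_fun setT (fun t => tau2 i t - tau1 i.-1 t).
  move=> /andP[i2 im]; apply: measurable_funB.
    by apply: M2; apply/andP; split; [exact: ltnW|].
  by apply: M1; case: i i2 im => [//|[//|i]] _ /=.
have Idiff i : (2 <= i <= m.+1)%N ->
    (\int[P]_t (ppart (tau2 i t - tau1 i.-1 t))%:E
      = ((pcc m.+1 i)^-1 - (pcc m i.-1)^-1)%:E)%E.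
  move=> /andP[i2 im].
  have hi2 : (1 <= i <= m.+1)%N by rewrite im andbT ltnW.
  have hi1 : (1 <= i.-1 <= m)%N by case: i i2 im {hi2} => [//|[//|i]] _ /=.
  have md : measurable_fun setT (fun t => tau2 i t - tau1 i.-1 t).
    by apply: measurable_funB; [exact: M2 | exact: M1].
  have e : (\int[P]_t (ppart (tau2 i t))%:E
      = \int[P]_t ((ppart (tau2 i t - tau1 i.-1 t))%:E + (ppart (tau1 i.-1 t))%:E))%E.
    apply: ge0_ae_eq_integral => //.
    - exact: mpp (M2 _ hi2).
    - apply: emeasurable_funD; [exact: mpp md | exact: mpp (M1 _ hi1)].
    - by move=> t _; rewrite lee_fin ppart_ge0.
    - by move=> t _; apply: adde_ge0; rewrite lee_fin ppart_ge0.
    apply: filterS AE => t Ht _.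
    have t1 : 0 <= tau1 i.-1 t by case: (Ht i.-1) => _ + _; apply.
    have t12 : tau1 i.-1 t <= tau2 i t by case: (Ht i) => _ _; apply; rewrite i2.
    by rewrite -EFinD !ppart_id ?subr_ge0 ?subrK //; lra.
  move: e; rewrite ge0_integralD //; first last.
  - exact: mpp (M1 _ hi1).
  - exact: pp0.
  - exact: mpp md.
  - exact: pp0.
  rewrite (F2 i hi2).2 (F1 _ hi1).2 => e.
  by rewrite EFinB e addeK.
have ninv0 : 0 <= nR^-1 by rewrite invr_ge0; lra.
have nminv0 : 0 <= (nR * mR)^-1 by rewrite invr_ge0; apply: mulr_ge0; lra.
have IA : (\int[P]_t (fa t)%:E = (nR^-1 * (pcc m.+1 1)^-1)%:E)%E.
  rewrite (eq_integral (fun t => (nR^-1)%:E * (ppart (tau2 1%N t))%:E)%E); last first.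
    by move=> t _; rewrite EFinM.
  rewrite ge0_integralZl_EFin //; [|exact: pp0|exact: mpp (M2 _ _)].
  by rewrite (F2 1%N isT).2 -EFinM.
have IB : (\int[P]_t (fb t)%:E
    = (nR^-1 * \sum_(2 <= i < m.+2) ((pcc m.+1 i)^-1 - (pcc m i.-1)^-1))%:E)%E.
  rewrite (eq_integral (fun t => (nR^-1)%:E *
      \sum_(2 <= i < m.+2) (ppart (tau2 i t - tau1 i.-1 t))%:E)%E); last first.
    by move=> t _; rewrite sumEFin EFinM.
  rewrite ge0_integralZl_EFin //; first last.
  - by apply: emeasurable_sum_in => i; rewrite mem_index_iota => hi; apply: mpp; exact: mdiff.
  - by move=> t _; apply: sume_ge0 => i _; rewrite lee_fin ppart_ge0.
  rewrite ge0_integral_sum_in //; first last.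
  - by move=> k t _ _; rewrite lee_fin ppart_ge0.
  - by move=> i; rewrite mem_index_iota => hi; apply: mpp; exact: mdiff.
  rewrite EFinM -sumEFin big_seq [in RHS]big_seq.
  congr (_ * _)%E; apply: eq_bigr => i; rewrite mem_index_iota => hi.
  exact: Idiff.
have IC : (\int[P]_t (fc t)%:E
    = ((nR * mR)^-1 * \sum_(1 <= j < m.+1) (pcc m j)^-1)%:E)%E.
  rewrite (eq_integral (fun t => ((nR * mR)^-1)%:E *
      \sum_(1 <= j < m.+1) (ppart (tau1 j t))%:E)%E); last first.
    by move=> t _; rewrite sumEFin EFinM.
  rewrite ge0_integralZl_EFin //; first last.
  - by apply: emeasurable_sum_in => i; rewrite mem_index_iota => hi; apply: mpp; exact: M1.
  - by move=> t _; apply: sume_ge0 => i _; rewrite lee_fin ppart_ge0.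
  rewrite ge0_integral_sum_in //; first last.
  - by move=> k t _ _; rewrite lee_fin ppart_ge0.
  - by move=> i; rewrite mem_index_iota => hi; apply: mpp; exact: M1.
  rewrite EFinM -sumEFin big_seq [in RHS]big_seq.
  congr (_ * _)%E; apply: eq_bigr => i; rewrite mem_index_iota => hi.
  exact: (F1 i hi).2.
have IK : (\int[P]_t K%:E = K%:E)%E.
  by rewrite integral_cst // -[RHS]mule1; congr (_ * _)%E; exact: probability_setT.
have mE (f : T -> R) : measurable_fun setT f -> measurable_fun setT (fun t => (f t)%:E).
  by move=> mf; apply/measurable_EFinP.
have e0 (f : T -> R) : (forall t, 0 <= f t) -> forall t, setT t -> (0 <= (f t)%:E)%E.
  by move=> f0 t _; rewrite lee_fin.
have Itot : (\int[P]_t (fa t + fb t + fc t + K)%:E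
    = (nR^-1 * (pcc m.+1 1)^-1
       + nR^-1 * (\sum_(2 <= i < m.+2) ((pcc m.+1 i)^-1 - (pcc m i.-1)^-1))
       + (nR * mR)^-1 * (\sum_(1 <= j < m.+1) (pcc m j)^-1) + K)%:E)%E.
  have K1 : 0 <= K := K0.
  rewrite (eq_integral (fun t => (fa t + fb t + fc t)%:E + K%:E)%E); last first.
    by move=> t _; rewrite EFinD.
  rewrite ge0_integralD //; try (by apply: e0 => t; have := fa0 t; have := fb0 t; have := fc0 t; lra);
    try (by apply: mE; repeat (first [assumption | exact: measurable_cst | apply: measurable_funD])).
  rewrite IK (eq_integral (fun t => (fa t + fb t)%:E + (fc t)%:E)%E); last first.
    by move=> t _; rewrite EFinD.
  rewrite ge0_integralD //; try (by apply: e0 => t; have := fa0 t; have := fb0 t; have := fc0 t; lra);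
    try (by apply: mE; repeat (first [assumption | exact: measurable_cst | apply: measurable_funD])).
  rewrite IC (eq_integral (fun t => (fa t)%:E + (fb t)%:E)%E); last first.
    by move=> t _; rewrite EFinD.
  rewrite ge0_integralD //; try (by apply: e0 => t; have := fa0 t; have := fb0 t; have := fc0 t; lra);
    try (by apply: mE; repeat (first [assumption | exact: measurable_cst | apply: measurable_funD])).
  by rewrite IA IB -!EFinD.
apply: (@le_trans _ _ (\int[P]_t (fa t + fb t + fc t + K)%:E)%E); first exact: stepA.
rewrite Itot lee_fin.
have p1 : pcc m.+1 1 = 1 :> R.
  by rewrite /pcc subn1 /= addn1 -/nR divff // gt_eqF.
have S1 : \sum_(2 <= i < m.+2) ((pcc m.+1 i)^-1 - (pcc m i.-1)^-1)
    = \sum_(2 <= i < m.+2) ((m.+1 - i + 1)%:R : R)^-1.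
  rewrite !big_nat; apply: eq_bigr => i /andP[i2 im].
  have e : (m - i.-1 + 1 = m.+1 - i + 1)%N by lia.
  rewrite /pcc e -/nR -/mR.
  have k0 : (0 : R) < (m.+1 - i + 1)%:R by rewrite ltr0n addn1.
  rewrite !invf_div; field; move: k0; rewrite natrD => k0; apply/eqP; lra.
have S2 : (nR * mR)^-1 * \sum_(1 <= j < m.+1) (pcc m j)^-1
    = nR^-1 * \sum_(1 <= j < m.+1) ((m - j + 1)%:R : R)^-1.
  rewrite !mulr_sumr !big_nat; apply: eq_bigr => j /andP[j1 jm].
  rewrite /pcc -/mR.
  have k0 : (0 : R) < (m - j + 1)%:R by rewrite ltr0n addn1.
  rewrite !invf_div; field; move: k0; rewrite natrD -/mR => k0; apply/and3P; split; apply/eqP; lra.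
rewrite p1 S1 S2 invr1 mulr1.
have H1 := @harm_tel R m.+1 2 m.+2 ltac:(lia) ltac:(lia).
have H2 := @harm_tel R m 1 m.+1 ltac:(lia) ltac:(lia).
have e1 : (m.+3 - 2 = m.+1)%N by lia.
have e2 : (m.+3 - m.+2 = 1)%N by lia.
have e3 : (m.+2 - 1 = m.+1)%N by lia.
have e4 : (m.+2 - m.+1 = 1)%N by lia.
rewrite e1 e2 ln1 mulr0 subr0 -/nR in H1.
rewrite e3 e4 ln1 mulr0 subr0 -/nR in H2.
have HK : K <= mR^-1.
  have mi0 : 0 < mR^-1 by rewrite invr_gt0; lra.
  have hm : -1 < mR^-1 by lra.
  have := le_ln1Dx hm.
  rewrite (_ : 1 + mR^-1 = nR / mR); last by rewrite nRE; field; apply/eqP; lra.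
  by rewrite ln_div ?posrE.
have Hm2 : mR^-1 <= 2 * nR^-1.
  have -> : 2 * nR^-1 = mR^-1 + (mR - 1) / (nR * mR).
    by rewrite nRE; field; apply/andP; split; apply/eqP; lra.
  rewrite lerDl divr_ge0 //; [lra | apply: mulr_ge0; lra].
have HL : 1 <= 2 * ln nR.
  have := @key_ln R 1 (lexx _); rewrite invr1 ln1 subr0 => h.
  have : ln (1 + 1 : R) <= ln nR by rewrite ler_ln ?posrE; lra.
  lra.
have x0 : 0 < nR^-1 by rewrite invr_gt0.
have T1 : nR^-1 * (\sum_(2 <= i < m.+2) ((m.+1 - i + 1)%:R : R)^-1) <= 2 * (nR^-1 * ln nR).
  by rewrite mulrCA ler_pM2l.
have T2 : nR^-1 * (\sum_(1 <= i < m.+1) ((m - i + 1)%:R : R)^-1) <= 2 * (nR^-1 * ln nR).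
  by rewrite mulrCA ler_pM2l.
have T3 : nR^-1 <= 2 * (nR^-1 * ln nR).
  by rewrite mulrCA -[X in X <= _]mulr1 ler_pM2l.
rewrite /K in HK; rewrite /K [ln nR / nR]mulrC.
move: T1 T2 T3 HK Hm2.
move: (nR^-1 * (\sum_(2 <= i < m.+2) ((m.+1 - i + 1)%:R : R)^-1)) => y1.
move: (nR^-1 * (\sum_(1 <= i < m.+1) ((m - i + 1)%:R : R)^-1)) => y2.
move: (nR^-1 * ln nR) => z.
move: (ln nR - ln mR) (mR^-1) => k w.
rewrite -[2 / nR]/(2 * nR^-1).
move: (nR^-1) => x h1 h2 h3 h4 h5.
lra.
Qed.
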